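(* For every $s>0$ let $\sigma_s$ be a Borel probability measure on $\mathbb S^{N-1}$ and let $e_s\in\mathbb S^{N-1}$ be a maximum point of $M_{s,\sigma_s}$. Then $$\liminf_{s\to+\infty}\int_{\mathbb S^{N-1}}|e_s\cdot\theta|^{2s}\sigma_s(d\theta)>0\quad\Longleftrightarrow\quad\inf_{s>0}\int_{\mathbb S^{N-1}}|e_s\cdot\theta|^{2s}\sigma_s(d\theta)>0.$$
   Context: For a Borel probability measure $\sigma$ on $\mathbb S^{N-1}$, $s\ge0$ and $e\in\mathbb S^{N-1}$, $M_{s,\sigma}(e)=\int_{\mathbb S^{N-1}}|e\cdot\theta|^{2s}\sigma(d\theta)$. *)

(* Defs.v *)
From HB Require Import structures.
From mathcomp Require Import all_boot all_order all_algebra.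
From mathcomp Require Import all_classical all_reals all_analysis.
Set Implicit Arguments. Unset Strict Implicit. Unset Printing Implicit Defensive.
Import Order.TTheory GRing.Theory Num.Theory.
Import numFieldNormedType.Exports.
Local Open Scope classical_set_scope.
Local Open Scope ring_scope.

Definition borelRN (R : realType) (N : nat) :=
  g_sigma_algebraType (@open 'rV[R]_N).

Definition dotv (R : realType) (N : nat) (x y : 'rV[R]_N) : R :=
  \sum_(i < N) x ord0 i * y ord0 i.

Definition sphere (R : realType) (N : nat) : set 'rV[R]_N :=
  [set x | dotv x x = 1].
Arguments sphere : clear implicits.

(* A Borel probability measure on S^{N-1} is represented as a Borel
   probability measure on R^N giving full mass to S^{N-1}. *)
Definition supported_on_sphere (R : realType) (N : nat)
  (sigma : probability (borelRN R N) R) : Prop :=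
  sigma (~` (sphere R N : set (borelRN R N))) = 0%E.

Definition Msigma (R : realType) (N : nat) (s : R)
  (sigma : probability (borelRN R N) R) (e : 'rV[R]_N) : \bar R :=
  (\int[sigma]_(t in (sphere R N : set (borelRN R N)))
      (`|dotv e t| `^ (2 * s))%:E)%E.

(* Main.v *)
Require Import Defs.
From HB Require Import structures.
From mathcomp Require Import all_boot all_order all_algebra.
From mathcomp Require Import all_classical all_reals all_analysis.
From mathcomp Require Import measurable_realfun.
Import Order.TTheory GRing.Theory Num.Theory.
Import numFieldNormedType.Exports.
Local Open Scope classical_set_scope.
Local Open Scope ring_scope.

Lemma mcoord (R : realType) N (i : 'I_N) :
  measurable_fun (setT : set (borelRN R N)) (fun x : 'rV[R]_N => x ord0 i).
Proof.
apply: (measurability _ (RGenOpens.measurableE R)).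
move=> _ [_ [a [b ->] <-]].
apply: measurableI => //.
apply: sub_sigma_algebra.
move: (@coord_continuous R 1 N ord0 i) => /continuousP; apply.
exact: interval_open.
Qed.
Lemma ptw (R : realType) N (t : 'rV[R]_N) (s : R) : 0 < s -> dotv t t = 1 ->
  (N%:R^-1) `^ s <= \sum_(i < N) `|t ord0 i| `^ (2 * s).
Proof.
move=> s0 tt.
have [i Hi] : exists i : 'I_N, N%:R^-1 <= t ord0 i ^+ 2.
  apply: contrapT => H.
  have Hl : forall i : 'I_N, t ord0 i ^+ 2 < N%:R^-1.
    move=> i; rewrite ltNge; apply/negP => h; apply: H; by exists i.
  case: N t tt H Hl => [|n] t tt H Hl.
    by move: tt; rewrite /dotv big_ord0 => /eqP; rewrite eq_sym oner_eq0.
  have : \sum_(i < n.+1) t ord0 i * t ord0 i < \sum_(i < n.+1) (n.+1)%:R^-1 :> R.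
    apply: ltr_sum => //; first by apply/hasP; exists ord0 => //; rewrite mem_index_enum.
    by move=> j _; rewrite -expr2.
  rewrite sumr_const card_ord -[X in _ < X]mulr_natr mulVf ?pnatr_eq0 //.
  by move: tt; rewrite /dotv => ->; rewrite ltxx.
rewrite (bigD1 i) //=.
apply: (@le_trans _ _ (`|t ord0 i| `^ (2*s))); last first.
  by rewrite lerDl; apply: sumr_ge0 => j _; exact: powR_ge0.
rewrite powRrM (@powR_mulrn R _ 2) // -normrX ger0_norm ?sqr_ge0 //.
apply: ge0_ler_powR => //; first exact: ltW.
  by rewrite nnegrE invr_ge0.
by rewrite nnegrE sqr_ge0.
Qed.

Lemma dot_delta (R : realType) N (i : 'I_N) (t : 'rV[R]_N) :
  dotv (delta_mx ord0 i) t = t ord0 i.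
Proof.
rewrite /dotv (bigD1 i) //= big1 ?addr0 => [|j ji]; rewrite !mxE.
  by rewrite !eqxx mul1r.
by rewrite eqxx (negbTE ji) mul0r.
Qed.

Lemma sphere_delta (R : realType) N (i : 'I_N) : sphere R N (delta_mx ord0 i).
Proof. by rewrite /sphere /= dot_delta mxE !eqxx. Qed.

Lemma msphere (R : realType) N : measurable (sphere R N : set (borelRN R N)).
Proof.
have md : measurable_fun (setT : set (borelRN R N)) (fun t : 'rV[R]_N => dotv t t).
  apply: measurable_sum => i; apply: measurable_funM; exact: mcoord.
have := md measurableT _ (measurable_set1 (1:R)).
by rewrite setTI.
Qed.

Lemma sigmaS (R : realType) N (sigma : probability (borelRN R N) R) :
  supported_on_sphere sigma -> sigma (sphere R N : set (borelRN R N)) = 1%E.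
Proof.
move=> h; have := probability_setC sigma (measurableC (msphere R N)).
by rewrite setCK h sube0.
Qed.

Lemma mfi (R : realType) N (i : 'I_N) (s : R) :
  measurable_fun (setT : set (borelRN R N)) (fun t : 'rV[R]_N => `|t ord0 i| `^ (2*s)).
Proof.
have h1 := @measurable_powR R (2*s).
have h2 := @normr_measurable R setT.
have h3 := @mcoord R N i.
exact: (measurableT_comp h1 (measurableT_comp h2 h3)).
Qed.

Lemma lowb (R : realType) N (sigma : probability (borelRN R N) R) (x : 'rV[R]_N) (s : R) :
  (0 < N)%N -> 0 < s -> supported_on_sphere sigma ->
  (forall y, sphere R N y -> (Msigma s sigma y <= Msigma s sigma x)%E) ->
  (((N%:R^-1) `^ s / N%:R)%:E <= Msigma s sigma x)%E.
Proof.
move=> N0 s0 hs hmax.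
set c := (N%:R^-1) `^ s.
have mS := msphere R N.
have hsum : (c%:E <= \sum_(i < N) Msigma s sigma (delta_mx ord0 i))%E.
  rewrite /Msigma.
  under eq_bigr do under eq_integral do rewrite dot_delta.
  rewrite -ge0_integral_sum //; last first.
    by move=> i; apply/measurable_EFinP; apply: measurable_funTS; exact: mfi.
  apply: (@le_trans _ _ (\int[sigma]_(t in (sphere R N : set (borelRN R N))) (cst c%:E) t)%E).
    rewrite integral_cst //.
    rewrite -[X in (_ <= _ * X)%E]/(sigma (sphere R N : set (borelRN R N))).
    by rewrite sigmaS // mule1.
  under eq_integral do rewrite sumEFin.
  apply: ge0_le_integral => //.
  - by move=> t _; rewrite lee_fin powR_ge0.
  - apply/measurable_EFinP; apply: measurable_funTS; apply: measurable_sum => i; exact: mfi.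
  - by move=> t St /=; rewrite lee_fin; exact: ptw.
have m0 : (0 <= Msigma s sigma x)%E.
  by apply: integral_ge0 => t _; rewrite lee_fin powR_ge0.
have hle : (\sum_(i < N) Msigma s sigma (delta_mx ord0 i) <= \sum_(i < N) Msigma s sigma x)%E.
  by apply: lee_sum => i _; apply: hmax; exact: sphere_delta.
move: (le_trans hsum hle) m0.
case: (Msigma s sigma x) => [r| |] //.
  rewrite sumEFin lee_fin sumr_const card_ord => hc _.
  rewrite lee_fin ler_pdivrMr ?ltr0n //.
  by rewrite -mulr_natr in hc.
by move=> _ _; exact: leey.
Qed.

Theorem lemma2p2 (R : realType) (N : nat)
  (sigma : R -> probability (borelRN R N) R) (e : R -> 'rV[R]_N) :
  (forall s : R, 0 < s -> supported_on_sphere (sigma s)) ->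
  (forall s : R, 0 < s -> sphere R N (e s)) ->
  (forall s : R, 0 < s -> forall x : 'rV[R]_N, sphere R N x ->
     (Msigma s (sigma s) x <= Msigma s (sigma s) (e s))%E) ->
  ((0 < limf_einf (fun s : R => Msigma s (sigma s) (e s)) (pinfty_nbhs R))%E
   <->
   (0 < ereal_inf [set Msigma s (sigma s) (e s) | s in [set s : R | (0 < s)%R]])%E).
Proof.
move=> hsupp hsph hmax.
have N0 : (0 < N)%N.
  move: (hsph 1 ltr01); rewrite /sphere /dotv /=.
  case: (posnP N) => // N0'.
  move: (e 1); rewrite N0' => v.
  by rewrite big_ord0 => /eqP; rewrite eq_sym oner_eq0.
rewrite limf_einfE; split.
- move=> /ereal_sup_gt [_ [V [M [Mreal HM]] <-] hpos].
  set S := Num.max M 1.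
  set b := Order.min (ereal_inf ((fun s => Msigma s (sigma s) (e s)) @` V))
                     (((N%:R^-1) `^ S / N%:R)%:E).
  apply: (@lt_le_trans _ _ b).
    rewrite lt_min hpos /= lte_fin divr_gt0 ?ltr0n // powR_gt0 // invr_gt0 ltr0n //.
  apply: le_ereal_inf_tmp => _ [s s0 <-].
  case: (ltP M s) => hs.
    rewrite ge_min; apply/orP; left; apply: ereal_inf_lbound; exists s => //; exact: HM.
  rewrite ge_min; apply/orP; right.
  apply: le_trans _ (@lowb R N (sigma s) (e s) s N0 s0 (hsupp s s0) (hmax s s0)).
  rewrite lee_fin ler_wpM2r ?invr_ge0 ?ler0n //.
  apply: ger_powR.
    by rewrite invr_gt0 ltr0n N0 /= invf_le1 ?ltr0n // ler1n.
  by apply: le_trans hs _; rewrite le_max lexx.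
- move=> hinf; apply: lt_le_trans hinf _.
  apply: ereal_sup_ubound; exists [set s : R | 0 < s] => //.
  by exists 0; split => // x.
Qed.
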